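(* For every fixed $\varepsilon>0$ there is a data structure of size $O(n^{1+\varepsilon})$, built for a sequence $Y=y_1,\dots,y_n$ of $n$ distinct real numbers, that answers every query $(i,j,\sigma)$ (for all six types $\sigma$) in constant time, i.e., with a number of table lookups bounded by a constant depending only on $\varepsilon$.
   Context: Let $Y=y_1,\dots,y_n$ be a sequence of $n$ distinct real numbers, viewed as the points $(k,y_k)$, $k=1,\dots,n$. A query is a triple $(i,j,\sigma)$ with $i,j\in\{1,\dots,n\}$ and a type $\sigma=(a,\mathrm{dir})$, where $a\in\{1,2,3\}$ and $\mathrm{dir}\in\{\rightarrow,\leftarrow\}$. The horizontal lines $y=y_i$ and $y=y_j$ split the plane into three open strips $R_1$ (above both lines), $R_2$ (between them) and $R_3$ (below both), and $S_a=\{k\in\{1,\dots,n\} : (k,y_k)\in R_a\}$. For a right query ($\mathrm{dir}=\rightarrow$): if $S_a=\emptyset$ the answer is $\emptyset$; otherwise, if $S_a$ contains an index larger than $i$ the answer is the minimum index in $S_a$ larger than $i$, and if all indices of $S_a$ are smaller than $i$ the answer is the minimum index of $S_a$. A left query ($\mathrm{dir}=\leftarrow$) is symmetric: if $S_a=\emptyset$ the answer is $\emptyset$; otherwise the answer is the maximum index in $S_a$ smaller than $i$ if one exists, and else the maximum index of $S_a$. *)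

(* Defs.v *)
From Stdlib Require Import Reals List Arith.
Import ListNotations.
Open Scope R_scope.

(* A sequence y_1..y_n is given as a function Y : nat -> R; only the values
   at indices 1..n matter. *)
Definition distinct_on (n : nat) (Y : nat -> R) : Prop :=
  forall k l : nat, (1 <= k <= n)%nat -> (1 <= l <= n)%nat -> k <> l -> Y k <> Y l.

Inductive region : Type := R1 | R2 | R3.   (* above both / between / below both *)
Inductive direction : Type := Right | Left.

Definition Rltb (a b : R) : bool := if Rlt_dec a b then true else false.

Definition in_region (Y : nat -> R) (i j : nat) (a : region) (k : nat) : bool :=
  match a with
  | R1 => Rltb (Rmax (Y i) (Y j)) (Y k)
  | R2 => Rltb (Rmin (Y i) (Y j)) (Y k) && Rltb (Y k) (Rmax (Y i) (Y j))
  | R3 => Rltb (Y k) (Rmin (Y i) (Y j))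
  end.

Definition S_set (n : nat) (Y : nat -> R) (i j : nat) (a : region) : list nat :=
  filter (in_region Y i j a) (seq 1 n).

Definition head_opt (l : list nat) : option nat :=
  match l with [] => None | x :: _ => Some x end.
Definition last_opt (l : list nat) : option nat :=
  match l with [] => None | x :: l' => Some (last l' x) end.

(* The answer to the query (i, j, (a, dir)); None encodes the empty answer. *)
Definition answer (n : nat) (Y : nat -> R) (i j : nat) (a : region) (d : direction)
  : option nat :=
  let S := S_set n Y i j a in
  match d with
  | Right =>
      match head_opt (filter (fun k => Nat.ltb i k) S) with
      | Some k => Some k
      | None => head_opt S
      end
  | Left =>
      match last_opt (filter (fun k => Nat.ltb k i) S) with
      | Some k => Some k
      | None => last_opt S
      end
  end.

(* A query algorithm is an adaptive decision tree: at each node it reads one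
   cell of the table (address) and branches arbitrarily on the value read. *)
Inductive ptree : Type :=
  | Leaf (ans : option nat)
  | Probe (addr : nat) (next : nat -> ptree).

(* Run the algorithm with at most [fuel] table lookups; None if it has not
   terminated within that many lookups.  Out-of-range cells read as 0. *)
Fixpoint run (fuel : nat) (table : list nat) (t : ptree) : option (option nat) :=
  match t with
  | Leaf a => Some a
  | Probe addr k =>
      match fuel with
      | O => None
      | S f => run f table (k (nth addr table 0%nat))
      end
  end.

(* Main.v *)
Require Import Defs.
From Stdlib Require Import Reals List Arith.
Open Scope R_scope.
From Stdlib Require Import Lia Lra ZArith.
Import ListNotations.
Local Open Scope bool_scope.

Local Open Scope nat_scope.

Fixpoint cntP (P : nat -> bool) (m : nat) : nat :=
  match m with 0 => 0 | S m' => cntP P m' + (if P (S m') then 1 else 0) end.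

Lemma cntP_le_m P m : cntP P m <= m.
Proof. induction m; simpl; [lia|destruct (P (S m)); lia]. Qed.

Lemma cntP_ext P Q m : (forall k, 1 <= k <= m -> P k = Q k) -> cntP P m = cntP Q m.
Proof.
  induction m; intros H; simpl; auto.
  rewrite IHm by (intros; apply H; lia). rewrite (H (S m)) by lia. reflexivity.
Qed.

Lemma cntP_mono_m P a b : a <= b -> cntP P a <= cntP P b.
Proof. induction 1; simpl; [lia|destruct (P (S m)); lia]. Qed.

Lemma cntP_le_pred P Q m : (forall k, 1 <= k <= m -> P k = true -> Q k = true) ->
  cntP P m <= cntP Q m.
Proof.
  induction m; intros H; simpl; auto.
  specialize (IHm (fun k Hk => H k ltac:(lia))).
  destruct (P (S m)) eqn:E; [rewrite (H (S m)) by (auto; lia)|]; destruct (Q (S m)); lia.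
Qed.

Lemma cntP_lt P Q m : (forall k, 1 <= k <= m -> P k = true -> Q k = true) ->
  (exists k0, 1 <= k0 <= m /\ Q k0 = true /\ P k0 = false) ->
  cntP P m < cntP Q m.
Proof.
  induction m; intros H [k0 [Hk [HQ HP]]]; [lia|]. simpl.
  assert (Hle := cntP_le_pred P Q m (fun k Hk => H k ltac:(lia))).
  destruct (Nat.eq_dec k0 (S m)).
  - subst. rewrite HQ, HP. lia.
  - assert (cntP P m < cntP Q m) by (apply IHm; [intros; apply H; auto; lia| exists k0; repeat split; auto; lia]).
    destruct (P (S m)) eqn:E; [rewrite (H (S m)) by (auto; lia)|]; destruct (Q (S m)); lia.
Qed.

Lemma cntP_strict P i k : P k = true -> i < k -> cntP P i < cntP P k.
Proof.
  intros HP Hik. destruct k; [lia|]. simpl. rewrite HP.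
  assert (cntP P i <= cntP P k) by (apply cntP_mono_m; lia). lia.
Qed.

Lemma cntP_cut P i m : i <= m -> cntP (fun k => P k && (k <=? i)) m = cntP P i.
Proof.
  induction 1.
  - apply cntP_ext. intros k Hk. destruct (P k); simpl; auto. apply Nat.leb_le; lia.
  - cbn [cntP]. rewrite IHle. replace (S m <=? i) with false by (symmetry; apply Nat.leb_gt; lia).
    destruct (P (S m)); cbn; lia.
Qed.

Lemma cntP_filter P m : cntP P m = length (filter P (seq 1 m)).
Proof.
  induction m; [reflexivity|]. cbn [cntP]. rewrite seq_S, filter_app, length_app. simpl.
  replace (1 + m) with (S m) by lia. destruct (P (S m)); simpl; lia.
Qed.

Definition Fst (n : nat) (P : nat -> bool) : option nat := head_opt (filter P (seq 1 n)).

Definition omin (a b : option nat) : option nat :=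
  match a, b with
  | None, _ => b
  | _, None => a
  | Some x, Some y => Some (Nat.min x y)
  end.

Lemma head_filter_ge P a m x : head_opt (filter P (seq a m)) = Some x -> a <= x.
Proof.
  revert a. induction m; intros a H; simpl in H; [discriminate|].
  destruct (P a); simpl in H; [inversion H; lia|]. apply IHm in H. lia.
Qed.

Lemma head_filter_or P Q1 Q2 a m :
  (forall k, a <= k < a + m -> P k = Q1 k || Q2 k) ->
  head_opt (filter P (seq a m)) =
  omin (head_opt (filter Q1 (seq a m))) (head_opt (filter Q2 (seq a m))).
Proof.
  revert a. induction m; intros a H; simpl; auto.
  rewrite (H a) by lia.
  destruct (Q1 a) eqn:E1, (Q2 a) eqn:E2; simpl.
  - f_equal. lia.
  - destruct (head_opt (filter Q2 (seq (S a) m))) eqn:E; simpl; auto.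
    apply head_filter_ge in E. f_equal; lia.
  - destruct (head_opt (filter Q1 (seq (S a) m))) eqn:E; simpl; auto.
    apply head_filter_ge in E. f_equal; lia.
  - apply IHm. intros; apply H; lia.
Qed.

Lemma Fst_or n P Q1 Q2 : (forall k, 1 <= k <= n -> P k = Q1 k || Q2 k) ->
  Fst n P = omin (Fst n Q1) (Fst n Q2).
Proof. intros H. unfold Fst. apply head_filter_or. intros; apply H; lia. Qed.

Lemma Fst_ext n P Q : (forall k, 1 <= k <= n -> P k = Q k) -> Fst n P = Fst n Q.
Proof.
  intros H. unfold Fst. f_equal. apply filter_ext_in. intros k Hk.
  apply in_seq in Hk. apply H; lia.
Qed.

Lemma Fst_spec n P k : Fst n P = Some k -> 1 <= k <= n /\ P k = true.
Proof.
  unfold Fst. destruct (filter P (seq 1 n)) eqn:E; simpl; intros H; [discriminate|].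
  inversion H; subst. assert (Hin : In k (filter P (seq 1 n))) by (rewrite E; left; auto).
  apply filter_In in Hin. destruct Hin as [Hin HP]. apply in_seq in Hin. split; auto; lia.
Qed.

Definition enc (o : option nat) : nat := match o with None => 0 | Some k => k end.
Definition dec (a : nat) : option nat := match a with 0 => None | k => Some k end.

Lemma dec_enc_Fst n P : dec (enc (Fst n P)) = Fst n P.
Proof.
  destruct (Fst n P) eqn:E; simpl; auto. apply Fst_spec in E. destruct n0; [lia|]; auto.
Qed.

Lemma enc_Fst_le n P : enc (Fst n P) <= n.
Proof. destruct (Fst n P) eqn:E; simpl; [apply Fst_spec in E|]; lia. Qed.

Fixpoint bind (t : ptree) (g : option nat -> ptree) : ptree :=
  match t with
  | Leaf a => g a
  | Probe ad k => Probe ad (fun x => bind (k x) g)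
  end.

Lemma run_mono f T t a : run f T t = Some a -> forall f', f <= f' -> run f' T t = Some a.
Proof.
  revert t. induction f; intros t H f' Hf; destruct t; try (destruct f'; simpl in *; congruence).
  destruct f' as [|f']; [lia|]. simpl in *. apply IHf; auto; lia.
Qed.

Lemma run_bind f1 f2 T t g a b : run f1 T t = Some a -> run f2 T (g a) = Some b ->
  run (f1 + f2) T (bind t g) = Some b.
Proof.
  revert t. induction f1; intros t H1 H2; destruct t; simpl in H1; try discriminate.
  - inversion H1; subst; cbn [bind]. eapply run_mono; eauto; lia.
  - inversion H1; subst; cbn [bind]. eapply run_mono; eauto; lia.
  - cbn [bind]. simpl. apply IHf1; auto.
Qed.


Local Open Scope nat_scope.

Lemma div_iff b a v : 0 < b -> (a / b = v <-> v * b <= a < v * b + b).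
Proof.
  intros Hb. split.
  - intros <-. pose proof (Nat.div_mod a b ltac:(lia)). pose proof (Nat.mod_upper_bound a b ltac:(lia)).
    nia.
  - intros H. symmetry. apply (Nat.div_unique a b v (a - v*b)); nia.
Qed.

Lemma div_bounds b a : 0 < b -> (a / b) * b <= a < (a / b) * b + b.
Proof. intros Hb. apply (div_iff b a (a/b) Hb). reflexivity. Qed.

Lemma div_mono b a a' : 0 < b -> a <= a' -> a / b <= a' / b.
Proof. intros. apply Nat.Div0.div_le_mono; lia. Qed.

Definition sz (f L d : nat) := f ^ (L - d).

Lemma sz_pos f L d : 1 <= f -> 0 < sz f L d.
Proof. intros. unfold sz. apply Nat.neq_0_lt_0. apply Nat.pow_nonzero. lia. Qed.

Lemma sz_succ f L d : d < L -> sz f L d = sz f L (S d) * f.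
Proof. intros. unfold sz. replace (L - d) with (S (L - S d)) by lia. rewrite Nat.pow_succ_r'. lia. Qed.

Lemma sz_L f L : sz f L L = 1.
Proof. unfold sz. rewrite Nat.sub_diag. reflexivity. Qed.

Lemma pow_split f L d : d <= L -> f ^ d * sz f L d = f ^ L.
Proof. intros. unfold sz. rewrite <- Nat.pow_add_r. f_equal. lia. Qed.

Definition inn f L (rho : nat -> nat) d v k := rho k / sz f L d =? v.
Definition cnt f L rho d v i := cntP (inn f L rho d v) i.
Definition NodeAns n f L rho d v lo hi p :=
  Fst n (fun k => inn f L rho d v k && (p <? cnt f L rho d v k) && (lo <=? rho k) && (rho k <? hi)).
Definition CasV n f L rho d v c p :=
  cntP (fun k => inn f L rho (S d) (v * f + c) k && (cnt f L rho d v k <=? p)) n.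

Lemma inn_iff f L rho d v k : 1 <= f ->
  (inn f L rho d v k = true <-> v * sz f L d <= rho k < v * sz f L d + sz f L d).
Proof. intros Hf. unfold inn. rewrite Nat.eqb_eq. apply div_iff, sz_pos; auto. Qed.

Lemma child_in_node f L rho d v c k : 1 <= f -> d < L -> c < f ->
  inn f L rho (S d) (v * f + c) k = true -> inn f L rho d v k = true.
Proof.
  intros Hf HdL Hc H. apply inn_iff in H; auto. apply inn_iff; auto.
  rewrite (sz_succ f L d HdL). nia.
Qed.

Lemma mono f L rho d v i k : inn f L rho d v k = true ->
  (cnt f L rho d v i <? cnt f L rho d v k) = (i <? k).
Proof.
  intros H. unfold cnt. destruct (Nat.ltb_spec i k).
  - apply Nat.ltb_lt. apply cntP_strict; auto.
  - apply Nat.ltb_ge. apply cntP_mono_m; auto.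
Qed.

Lemma cnt_cap n (rho : nat -> nat) s v i : 0 < s -> i <= n ->
  (forall a b, 1 <= a <= n -> 1 <= b <= n -> rho a = rho b -> a = b) ->
  cntP (fun k => rho k / s =? v) i <= s.
Proof.
  intros Hs Hi Hinj. rewrite cntP_filter.
  set (l := filter (fun k => rho k / s =? v) (seq 1 i)).
  rewrite <- (length_map rho l). transitivity (length (seq (v * s) s)); [| rewrite length_seq; lia].
  apply NoDup_incl_length.
  - apply NoDup_map_NoDup_ForallPairs.
    + intros a b Ha Hb. unfold l in *. apply filter_In in Ha, Hb.
      destruct Ha as [Ha _], Hb as [Hb _]. apply in_seq in Ha, Hb. apply Hinj; lia.
    + apply NoDup_filter, seq_NoDup.
  - intros y Hy. apply in_map_iff in Hy. destruct Hy as [k [<- Hk]].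
    unfold l in Hk. apply filter_In in Hk. destruct Hk as [_ Hk].
    apply Nat.eqb_eq in Hk. apply (div_iff s) in Hk; auto. apply in_seq. lia.
Qed.

Lemma cas_ok n f L rho d v c i : 1 <= f -> d < L -> c < f -> i <= n ->
  CasV n f L rho d v c (cnt f L rho d v i) = cnt f L rho (S d) (v * f + c) i.
Proof.
  intros Hf HdL Hc Hi. unfold CasV. change (cnt f L rho (S d) (v * f + c) i) with (cntP (inn f L rho (S d) (v * f + c)) i).
  rewrite <- (cntP_cut (inn f L rho (S d) (v * f + c)) i n Hi).
  apply cntP_ext. intros k Hk.
  destruct (inn f L rho (S d) (v * f + c) k) eqn:E; simpl; auto.
  apply child_in_node in E; auto.
  pose proof (mono f L rho d v i k E) as M.
  destruct (Nat.ltb_spec (cnt f L rho d v i) (cnt f L rho d v k)), (Nat.ltb_spec i k); try discriminate M;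
  destruct (Nat.leb_spec (cnt f L rho d v k) (cnt f L rho d v i));
  destruct (Nat.leb_spec k i); auto; lia.
Qed.


Local Open Scope nat_scope.

Definition Bx f := f + 1.
Definition Mw f L := 2 * f ^ L.
Definition addr n f L t kind d w x y :=
  S n + (((((t * 3 + kind) * S L + d) * Mw f L + w) * Bx f + x) * Bx f + y).
Definition wkey f L d v p := v * (sz f L d + 1) + p.

Fixpoint cost m := match m with 0 => 1 | S m' => 3 + 2 * cost m' end.

Fixpoint alg n f L t m v lo hi p {struct m} : ptree :=
  match m with
  | 0 => if (lo <=? v) && (v <? hi)
         then Probe (addr n f L t 2 L (wkey f L L v p) 0 0) (fun a => Leaf (dec a))
         else Leaf None
  | S m' =>
     let d := L - m in let s := sz f L (L - m') in let u := v * f in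
     let lo' := Nat.max lo (u * s) in let hi' := Nat.min hi ((u + f) * s) in
     if hi' <=? lo' then Leaf None else
     let cl := lo' / s in let ch := (hi' - 1) / s in
     let wk := wkey f L d v p in
     Probe (addr n f L t 0 d wk (cl + 1 - u) (ch - u)) (fun b =>
     Probe (addr n f L t 1 d wk (cl - u) 0) (fun p1 =>
     bind (alg n f L t m' cl lo hi p1) (fun r1 =>
     Probe (addr n f L t 1 d wk (ch - u) 0) (fun p2 =>
     bind (alg n f L t m' ch lo hi p2) (fun r2 => Leaf (omin (dec b) (omin r1 r2)))))))
  end.

Definition TabOK n f L rho t (T : list nat) : Prop :=
 (forall d v x y p, d < L -> v < f ^ d -> x <= f -> y <= f -> p <= sz f L d ->
   nth (addr n f L t 0 d (wkey f L d v p) x y) T 0 =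
   enc (NodeAns n f L rho d v ((v * f + x) * sz f L (S d)) ((v * f + y) * sz f L (S d)) p)) /\
 (forall d v c p, d < L -> v < f ^ d -> c < f -> p <= sz f L d ->
   nth (addr n f L t 1 d (wkey f L d v p) c 0) T 0 = CasV n f L rho d v c p) /\
 (forall v p, v < f ^ L -> p <= 1 ->
   nth (addr n f L t 2 L (wkey f L L v p) 0 0) T 0 = enc (NodeAns n f L rho L v v (S v) p)).

Definition InjOn n (rho : nat -> nat) :=
  forall a b, 1 <= a <= n -> 1 <= b <= n -> rho a = rho b -> a = b.

Lemma Fst_false n P : (forall k, 1 <= k <= n -> P k = false) -> Fst n P = None.
Proof.
  intros H. rewrite (Fst_ext n P (fun _ => false) H). unfold Fst.
  induction (seq 1 n); simpl; auto.
Qed.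

Lemma cnt_le_sz n f L rho d v i : 1 <= f -> i <= n -> InjOn n rho -> cnt f L rho d v i <= sz f L d.
Proof. intros. unfold cnt, inn. apply (cnt_cap n); auto. apply sz_pos; auto. Qed.

Lemma split_arith s f v lo hi r : 0 < s -> 1 <= f ->
  let u := v * f in
  let lo' := Nat.max lo (u * s) in let hi' := Nat.min hi ((u + f) * s) in
  lo' < hi' ->
  let cl := lo' / s in let ch := (hi' - 1) / s in
  u <= cl /\ cl <= ch /\ ch < u + f /\
  (u * s <= r < (u + f) * s ->
   ((lo <= r < hi) <->
    ((cl + 1) * s <= r < ch * s) \/ (r / s = cl /\ lo <= r < hi) \/ (r / s = ch /\ lo <= r < hi))).
Proof.
  intros Hs Hf u lo' hi' Hlh cl ch.
  pose proof (div_bounds s lo' Hs) as Bl. pose proof (div_bounds s (hi' - 1) Hs) as Bh.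
  fold cl in Bl. fold ch in Bh.
  assert (u <= cl). { apply Nat.div_le_lower_bound; [lia|]. unfold lo'. lia. }
  assert (cl <= ch). { apply div_mono; auto. lia. }
  assert (ch < u + f). { apply Nat.Div0.div_lt_upper_bound. unfold hi' in *. lia. }
  split; [auto|split;[auto|split;[auto|]]]. intros Hr.
  pose proof (div_bounds s r Hs) as Br.
  split.
  - intros Hlr.
    assert (cl <= r / s) by (apply div_mono; auto; unfold lo'; lia).
    assert (r / s <= ch) by (apply div_mono; auto; unfold hi'; lia).
    destruct (Nat.eq_dec (r / s) cl); [right; left; auto|].
    destruct (Nat.eq_dec (r / s) ch); [right; right; auto|].
    left.
    assert ((cl + 1) * s <= r / s * s) by (apply Nat.mul_le_mono_r; lia).
    assert ((r / s + 1) * s <= ch * s) by (apply Nat.mul_le_mono_r; lia).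
    lia.
  - intros [H3|[H3|H3]]; try tauto. unfold lo', hi' in *. lia.
Qed.


Local Open Scope nat_scope.

Lemma Fst_or' n Q1 Q2 : omin (Fst n Q1) (Fst n Q2) = Fst n (fun k => Q1 k || Q2 k).
Proof. symmetry. apply Fst_or. auto. Qed.

Lemma alg_correct n f L rho t T : 1 <= f -> InjOn n rho -> TabOK n f L rho t T ->
  forall m, m <= L -> forall v lo hi i, v < f ^ (L - m) -> i <= n ->
  run (cost m) T (alg n f L t m v lo hi (cnt f L rho (L - m) v i)) =
  Some (NodeAns n f L rho (L - m) v lo hi (cnt f L rho (L - m) v i)).
Proof.
  intros Hf Hinj [HB [HC HL]]. induction m as [|m IH]; intros Hm v lo hi i Hv Hi.
  - rewrite Nat.sub_0_r in *. cbn [alg].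
    destruct ((lo <=? v) && (v <? hi)) eqn:E.
    + cbn [cost run]. rewrite HL; auto.
      2:{ rewrite <- (sz_L f L). apply (cnt_le_sz n); auto. }
      unfold NodeAns. rewrite dec_enc_Fst. f_equal. apply Fst_ext. intros k Hk.
      destruct (inn f L rho L v k) eqn:Ei; simpl; auto.
      apply inn_iff in Ei; auto. rewrite sz_L in Ei.
      assert (rho k = v) by lia. rewrite H.
      apply andb_prop in E. destruct E as [E1 E2]. rewrite E1, E2.
      rewrite (proj2 (Nat.leb_le v v)), (proj2 (Nat.ltb_lt v (S v))) by lia. reflexivity.
    + cbn [cost run]. f_equal. symmetry. unfold NodeAns. apply Fst_false. intros k Hk.
      destruct (inn f L rho L v k) eqn:Ei; simpl; auto.
      apply inn_iff in Ei; auto. rewrite sz_L in Ei.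
      assert (rho k = v) by lia. rewrite H. rewrite <- Bool.andb_assoc, E. apply Bool.andb_false_r.
  - set (d := L - S m) in *. assert (Hd : L - m = S d) by lia.
    assert (HdL : d < L) by lia.
    rewrite Hd in IH. cbn [alg]. rewrite Hd.
    set (p := cnt f L rho d v i).
    set (s := sz f L (S d)).
    assert (Hs : 0 < s) by (apply sz_pos; auto).
    assert (Hszd : sz f L d = s * f) by (apply sz_succ; auto).
    pose proof (split_arith s f v lo hi) as SA. cbv zeta in SA.
    set (lo' := Nat.max lo (v * f * s)) in *. set (hi' := Nat.min hi ((v * f + f) * s)) in *.
    destruct (Nat.leb_spec hi' lo') as [Hle|Hlt].
    + destruct (cost (S m)); cbn [run]; f_equal; symmetry; unfold NodeAns; apply Fst_false;
      intros k Hk; destruct (inn f L rho d v k) eqn:Ei; simpl; auto;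
      apply inn_iff in Ei; auto; rewrite Hszd in Ei;
      destruct (Nat.leb_spec lo (rho k)); destruct (Nat.ltb_spec (rho k) hi);
      rewrite ?Bool.andb_false_r; auto; unfold lo', hi' in *; lia.
    + fold d. set (cl := lo' / s) in *. set (ch := (hi' - 1) / s) in *.
      destruct (SA 0 Hs Hf Hlt) as [H1 [H2 [H3 _]]].
      assert (Hp : p <= sz f L d) by (apply (cnt_le_sz n); auto).
      assert (Hvf : v * f + f <= f ^ S d) by (rewrite Nat.pow_succ_r'; nia).
      replace (cost (S m)) with (S (S (cost m + S (cost m + 0)))) by (cbn; lia).
      cbn [run]. rewrite HB, HC by (auto; lia).
      subst p. rewrite cas_ok by (auto; lia).
      replace (v * f + (cl - v * f)) with cl by lia.
      eapply run_bind. { apply IH; auto; lia. }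
      cbn [run]. rewrite HC by (auto; lia).
      rewrite cas_ok by (auto; lia).
      replace (v * f + (ch - v * f)) with ch by lia.
      eapply run_bind. { apply IH; auto; lia. }
      cbn [run]. f_equal. unfold NodeAns at 1. rewrite dec_enc_Fst.
      unfold NodeAns. rewrite !Fst_or'. apply Fst_ext. intros k Hk.
      replace (v * f + (cl + 1 - v * f)) with (cl + 1) by lia. fold s.
      destruct (inn f L rho d v k) eqn:Ei.
      * rewrite (mono _ _ _ _ _ _ _ Ei).
        apply inn_iff in Ei; auto. rewrite Hszd in Ei.
        destruct (SA (rho k) Hs Hf Hlt) as [_ [_ [_ SAr]]].
        specialize (SAr ltac:(lia)).
        assert (Ma : (rho k / s =? cl) = true -> (cnt f L rho (S d) cl i <? cnt f L rho (S d) cl k) = (i <? k))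
          by (intro; apply mono; auto).
        assert (Mb : (rho k / s =? ch) = true -> (cnt f L rho (S d) ch i <? cnt f L rho (S d) ch k) = (i <? k))
          by (intro; apply mono; auto).
        change (inn f L rho (S d) cl k) with (rho k / s =? cl).
        change (inn f L rho (S d) ch k) with (rho k / s =? ch).
        destruct (Nat.eqb_spec (rho k / s) cl) as [Ea|Ea];
        [rewrite Ma by reflexivity|];
        (destruct (Nat.eqb_spec (rho k / s) ch) as [Eb|Eb];
        [rewrite Mb by reflexivity|]); simpl;
        destruct (Nat.ltb_spec i k); simpl; rewrite ?Bool.andb_false_r; auto;
        destruct (Nat.leb_spec ((cl + 1) * s) (rho k)); destruct (Nat.ltb_spec (rho k) (ch * s));
        destruct (Nat.leb_spec lo (rho k)); destruct (Nat.ltb_spec (rho k) hi); simpl; auto; lia.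
      * simpl.
        assert (Ea : inn f L rho (S d) cl k = false).
        { destruct (inn f L rho (S d) cl k) eqn:E; auto.
          replace cl with (v * f + (cl - v * f)) in E by lia.
          apply child_in_node in E; auto; [congruence|lia]. }
        assert (Eb : inn f L rho (S d) ch k = false).
        { destruct (inn f L rho (S d) ch k) eqn:E; auto.
          replace ch with (v * f + (ch - v * f)) in E by lia.
          apply child_in_node in E; auto; [congruence|lia]. }
        rewrite Ea, Eb. reflexivity.
Qed.


Local Open Scope nat_scope.

Definition SE n f L rho kind d w x y :=
  let v := w / (sz f L d + 1) in let p := w mod (sz f L d + 1) in
  match kind with
  | 0 => enc (NodeAns n f L rho d v ((v * f + x) * sz f L (S d)) ((v * f + y) * sz f L (S d)) p)
  | 1 => CasV n f L rho d v x p
  | _ => enc (NodeAns n f L rho d v v (S v) p)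
  end.

Definition Ent n f L (rho0 rho1 : nat -> nat) a :=
  if a <? S n then rho0 a else
  let a' := a - S n in
  let y := a' mod Bx f in let a1 := a' / Bx f in
  let x := a1 mod Bx f in let a2 := a1 / Bx f in
  let w := a2 mod Mw f L in let a3 := a2 / Mw f L in
  let d := a3 mod S L in let a4 := a3 / S L in
  let kind := a4 mod 3 in let t := a4 / 3 in
  SE n f L (if t =? 0 then rho0 else rho1) kind d w x y.

Definition SIZE n f L := S n + 2 * 3 * S L * Mw f L * Bx f * Bx f.

Definition table n f L rho0 rho1 := map (Ent n f L rho0 rho1) (seq 0 (SIZE n f L)).

Lemma mr B a b : b < B -> (a * B + b) / B = a /\ (a * B + b) mod B = b.
Proof.
  intros Hb. split.
  - apply div_iff; lia.
  - symmetry. apply (Nat.mod_unique _ _ a); lia.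
Qed.

Lemma mrb a A b B : a < A -> b < B -> a * B + b < A * B.
Proof. intros. assert ((a + 1) * B <= A * B) by (apply Nat.mul_le_mono_r; lia). lia. Qed.

Lemma Ent_addr n f L rho0 rho1 t kind d w x y :
  t < 2 -> kind < 3 -> d <= L -> w < Mw f L -> x < Bx f -> y < Bx f ->
  Ent n f L rho0 rho1 (addr n f L t kind d w x y) =
  SE n f L (if t =? 0 then rho0 else rho1) kind d w x y.
Proof.
  intros Ht Hk Hd Hw Hx Hy. unfold Ent, addr.
  replace (S n + (((((t * 3 + kind) * S L + d) * Mw f L + w) * Bx f + x) * Bx f + y) <? S n) with false
    by (symmetry; apply Nat.ltb_ge; lia).
  replace (S n + (((((t * 3 + kind) * S L + d) * Mw f L + w) * Bx f + x) * Bx f + y) - S n)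
    with ((((((t * 3 + kind) * S L + d) * Mw f L + w) * Bx f + x) * Bx f + y)) by lia.
  destruct (mr _ ((((t * 3 + kind) * S L + d) * Mw f L + w) * Bx f + x) _ Hy) as [-> ->].
  destruct (mr _ (((t * 3 + kind) * S L + d) * Mw f L + w) _ Hx) as [-> ->].
  destruct (mr _ ((t * 3 + kind) * S L + d) _ Hw) as [-> ->].
  destruct (mr (S L) (t * 3 + kind) d ltac:(lia)) as [-> ->].
  destruct (mr _ t _ Hk) as [-> ->]. reflexivity.
Qed.

Lemma addr_lt n f L t kind d w x y :
  t < 2 -> kind < 3 -> d <= L -> w < Mw f L -> x < Bx f -> y < Bx f ->
  addr n f L t kind d w x y < SIZE n f L.
Proof.
  intros. unfold addr, SIZE. apply Nat.add_lt_mono_l.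
  apply mrb; auto. apply mrb; auto. apply mrb; auto. apply mrb; auto; [|lia].
  replace (2 * 3) with 6 by reflexivity. lia.
Qed.

Lemma wkey_dec f L d v p : 1 <= f -> p <= sz f L d ->
  wkey f L d v p / (sz f L d + 1) = v /\ wkey f L d v p mod (sz f L d + 1) = p.
Proof. intros. unfold wkey. apply mr. lia. Qed.

Lemma wkey_lt f L d v p : 1 <= f -> d <= L -> v < f ^ d -> p <= sz f L d -> wkey f L d v p < Mw f L.
Proof.
  intros Hf Hd Hv Hp. unfold wkey, Mw.
  pose proof (pow_split f L d Hd).
  assert ((v + 1) * sz f L d <= f ^ d * sz f L d) by (apply Nat.mul_le_mono_r; lia).
  assert (f ^ d <= f ^ L) by (apply Nat.pow_le_mono_r; lia).
  lia.
Qed.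

Lemma nth_table n f L rho0 rho1 a : a < SIZE n f L ->
  nth a (table n f L rho0 rho1) 0 = Ent n f L rho0 rho1 a.
Proof.
  intros H. unfold table.
  rewrite (nth_indep _ 0 (Ent n f L rho0 rho1 0)) by (rewrite length_map, length_seq; lia).
  rewrite map_nth, seq_nth by lia. reflexivity.
Qed.

Lemma table_ok n f L rho0 rho1 t : 1 <= f -> t < 2 ->
  TabOK n f L (if t =? 0 then rho0 else rho1) t (table n f L rho0 rho1).
Proof.
  intros Hf Ht. split; [|split].
  - intros d v x y p Hd Hv Hx Hy Hp.
    rewrite nth_table by (apply addr_lt; unfold Bx; try lia; apply wkey_lt; auto; lia).
    rewrite Ent_addr by (unfold Bx; try lia; apply wkey_lt; auto; lia).
    unfold SE. destruct (wkey_dec f L d v p Hf Hp) as [-> ->]. reflexivity.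
  - intros d v c p Hd Hv Hc Hp.
    rewrite nth_table by (apply addr_lt; unfold Bx; try lia; apply wkey_lt; auto; lia).
    rewrite Ent_addr by (unfold Bx; try lia; apply wkey_lt; auto; lia).
    unfold SE. destruct (wkey_dec f L d v p Hf Hp) as [-> ->]. reflexivity.
  - intros v p Hv Hp. assert (Hp' : p <= sz f L L) by (rewrite sz_L; auto).
    rewrite nth_table by (apply addr_lt; unfold Bx; try lia; apply wkey_lt; auto; lia).
    rewrite Ent_addr by (unfold Bx; try lia; apply wkey_lt; auto; lia).
    unfold SE. destruct (wkey_dec f L L v p Hf Hp') as [-> ->]. reflexivity.
Qed.

Lemma table_vals n f L rho0 rho1 x : (forall a, rho0 a <= n) ->
  In x (table n f L rho0 rho1) -> x <= n.
Proof.
  intros H0 Hin. unfold table in Hin. apply in_map_iff in Hin. destruct Hin as [a [<- _]].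
  unfold Ent. destruct (a <? S n); auto.
  cbv zeta. unfold SE. destruct (_ / 3 =? 0); destruct (_ mod 3) as [|[|]];
  try apply enc_Fst_le; apply cntP_le_m.
Qed.

Lemma table_len n f L rho0 rho1 : length (table n f L rho0 rho1) = SIZE n f L.
Proof. unfold table. rewrite length_map, length_seq. reflexivity. Qed.


Local Open Scope nat_scope.

Lemma cntP_true m : cntP (fun _ => true) m = m.
Proof. induction m; simpl; lia. Qed.

Lemma cnt_root n f L rho k : 1 <= f -> n <= f ^ L -> (forall k, 1 <= k <= n -> rho k < n) ->
  k <= n -> cnt f L rho 0 0 k = k.
Proof.
  intros Hf HN Hr Hk. unfold cnt. rewrite <- (cntP_true k) at 2. apply cntP_ext.
  intros l Hl. unfold inn, sz. rewrite Nat.sub_0_r. rewrite Nat.div_small by (specialize (Hr l); lia).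
  reflexivity.
Qed.

Lemma root_query n f L rho t T lo hi i : 1 <= f -> n <= f ^ L ->
  (forall k, 1 <= k <= n -> rho k < n) -> InjOn n rho -> TabOK n f L rho t T -> i <= n ->
  run (cost L) T (alg n f L t L 0 lo hi i) =
  Some (Fst n (fun k => (i <? k) && (lo <=? rho k) && (rho k <? hi))).
Proof.
  intros Hf HN Hr Hinj HT Hi.
  pose proof (alg_correct n f L rho t T Hf Hinj HT L (le_n L) 0 lo hi i) as E.
  rewrite Nat.sub_diag in E. rewrite (cnt_root n f L rho i) in E by auto.
  rewrite E by (simpl; lia). f_equal. unfold NodeAns. apply Fst_ext. intros k Hk.
  rewrite (cnt_root n f L rho k) by (auto; lia).
  unfold inn, sz. rewrite Nat.sub_0_r. rewrite Nat.div_small by (specialize (Hr k); lia).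
  reflexivity.
Qed.

Definition rk (n : nat) (Y : nat -> R) (k : nat) : nat := cntP (fun l => Rltb (Y l) (Y k)) n.

Lemma Rltb_iff a b : Rltb a b = true <-> (a < b)%R.
Proof. unfold Rltb. destruct (Rlt_dec a b); split; intros; auto; discriminate. Qed.

Lemma Rltb_false a b : Rltb a b = false <-> ~ (a < b)%R.
Proof. unfold Rltb. destruct (Rlt_dec a b); split; intros; auto; try discriminate; tauto. Qed.

Lemma rk_le n Y a : rk n Y a <= n.
Proof. apply cntP_le_m. Qed.

Lemma rk_lt n Y a b : 1 <= a <= n -> (Y a < Y b)%R -> rk n Y a < rk n Y b.
Proof.
  intros Ha H. apply cntP_lt.
  - intros l _ Hl. apply Rltb_iff in Hl. apply Rltb_iff. eapply Rlt_trans; eauto.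
  - exists a. split; auto. split; [apply Rltb_iff; auto|]. apply Rltb_false. apply Rlt_irrefl.
Qed.

Lemma rk_lt_iff n Y a b : distinct_on n Y -> 1 <= a <= n -> 1 <= b <= n ->
  ((Y a < Y b)%R <-> rk n Y a < rk n Y b).
Proof.
  intros HD Ha Hb. split; [apply rk_lt; auto|]. intros H.
  destruct (total_order_T (Y a) (Y b)) as [[H1|H1]|H1]; auto.
  - destruct (Nat.eq_dec a b); [subst; lia|]. exfalso. exact (HD a b Ha Hb n0 H1).
  - apply (rk_lt n Y b a Hb) in H1. lia.
Qed.

Lemma rk_inj n Y : distinct_on n Y -> InjOn n (rk n Y).
Proof.
  intros HD a b Ha Hb E. destruct (Nat.eq_dec a b); auto. exfalso.
  destruct (total_order_T (Y a) (Y b)) as [[H1|H1]|H1].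
  - apply (rk_lt n Y a b Ha) in H1. lia.
  - exact (HD a b Ha Hb n0 H1).
  - apply (rk_lt n Y b a Hb) in H1. lia.
Qed.

Lemma rk_bound n Y k : 1 <= k <= n -> rk n Y k < n.
Proof.
  intros Hk. rewrite <- (cntP_true n) at 2. apply cntP_lt; auto.
  exists k. split; auto. split; auto. apply Rltb_false. apply Rlt_irrefl.
Qed.

Lemma Rltb_rk n Y a b : distinct_on n Y -> 1 <= a <= n -> 1 <= b <= n ->
  Rltb (Y a) (Y b) = (rk n Y a <? rk n Y b).
Proof.
  intros HD Ha Hb. destruct (Rltb (Y a) (Y b)) eqn:E.
  - apply Rltb_iff in E. apply (rk_lt_iff n Y a b HD Ha Hb) in E. symmetry. apply Nat.ltb_lt. auto.
  - apply Rltb_false in E. symmetry. apply Nat.ltb_ge.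
    destruct (Nat.lt_ge_cases (rk n Y a) (rk n Y b)); auto.
    exfalso. apply E. apply (rk_lt_iff n Y a b HD Ha Hb). auto.
Qed.

Ltac dcmp := repeat match goal with
 | |- context [?a <=? ?b] => destruct (Nat.leb_spec a b)
 | |- context [?a <? ?b] => destruct (Nat.ltb_spec a b) end.

Definition rng (a : region) (n ri rj : nat) : nat * nat :=
  match a with
  | Defs.R1 => (S (Nat.max ri rj), n)
  | Defs.R2 => (S (Nat.min ri rj), Nat.max ri rj)
  | Defs.R3 => (0, Nat.min ri rj)
  end.

Lemma region_rk n Y i j a k : distinct_on n Y -> 1 <= i <= n -> 1 <= j <= n -> 1 <= k <= n ->
  in_region Y i j a k =
  (fst (rng a n (rk n Y i) (rk n Y j)) <=? rk n Y k) && (rk n Y k <? snd (rng a n (rk n Y i) (rk n Y j))).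
Proof.
  intros HD Hi Hj Hk. pose proof (rk_bound n Y k Hk) as Hb.
  assert (Hij : (Y i <= Y j)%R -> rk n Y i <= rk n Y j).
  { intros H. destruct (Nat.lt_ge_cases (rk n Y j) (rk n Y i)); auto.
    apply (rk_lt_iff n Y j i HD Hj Hi) in H0. lra. }
  assert (Hji : ~ (Y i <= Y j)%R -> rk n Y j < rk n Y i).
  { intros H. apply (rk_lt_iff n Y j i HD Hj Hi). lra. }
  unfold in_region, Rmax, Rmin.
  destruct (Rle_dec (Y i) (Y j)) as [H|H]; [specialize (Hij H)|specialize (Hji H)];
  destruct a; cbn [fst snd rng]; rewrite ?(Rltb_rk n Y _ _ HD Hi Hk), ?(Rltb_rk n Y _ _ HD Hj Hk),
    ?(Rltb_rk n Y _ _ HD Hk Hi), ?(Rltb_rk n Y _ _ HD Hk Hj);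
  dcmp; simpl; try reflexivity; exfalso; lia.
Qed.


Local Open Scope nat_scope.

Lemma filter_filter' {A} (P Q : A -> bool) l : filter P (filter Q l) = filter (fun k => Q k && P k) l.
Proof. induction l; simpl; auto. destruct (Q a); simpl; [destruct (P a); simpl; rewrite IHl; auto|auto]. Qed.

Lemma rev_seq1 n : rev (seq 1 n) = map (fun k => n + 1 - k) (seq 1 n).
Proof.
  induction n; auto. replace (rev (seq 1 (S n))) with (S n :: rev (seq 1 n)) by (rewrite seq_S, rev_app_distr; reflexivity).
  rewrite IHn. cbn [seq map].
  f_equal; [lia|]. rewrite <- (seq_shift n 1), map_map. apply map_ext_in. intros a Ha.
  apply in_seq in Ha. lia.
Qed.

Lemma last_cons (l : list nat) a : last_opt (a :: l) = match last_opt l with None => Some a | Some y => Some y end.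
Proof.
  destruct l as [|b l]; [reflexivity|]. unfold last_opt. f_equal.
  assert (H : forall l (b x y : nat), last (b :: l) x = last (b :: l) y).
  { induction l0; intros; auto. change (last (b0 :: a0 :: l0) x) with (last (a0 :: l0) x).
    change (last (b0 :: a0 :: l0) y) with (last (a0 :: l0) y). auto. }
  destruct l as [|c l]; auto. change (last (c :: l) a = last (c :: l) b). apply H.
Qed.

Lemma head_app1 (l : list nat) a : head_opt (l ++ [a]) = match head_opt l with None => Some a | Some y => Some y end.
Proof. destruct l; reflexivity. Qed.

Lemma last_head_rev (l : list nat) : last_opt l = head_opt (rev l).
Proof.
  induction l as [|a l IH]; auto. rewrite last_cons, IH. simpl. rewrite head_app1. reflexivity.
Qed.

Lemma head_map (g : nat -> nat) l : head_opt (map g l) = option_map g (head_opt l).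
Proof. destruct l; auto. Qed.

Lemma last_filter n P : last_opt (filter P (seq 1 n)) =
  option_map (fun k => n + 1 - k) (Fst n (fun k => P (n + 1 - k))).
Proof.
  rewrite last_head_rev, <- filter_rev, rev_seq1, filter_map_swap, head_map. reflexivity.
Qed.

Lemma answer_right n Y i j a : distinct_on n Y -> 1 <= i <= n -> 1 <= j <= n ->
  let lo := fst (rng a n (rk n Y i) (rk n Y j)) in let hi := snd (rng a n (rk n Y i) (rk n Y j)) in
  answer n Y i j a Right =
  match Fst n (fun k => (i <? k) && (lo <=? rk n Y k) && (rk n Y k <? hi)) with
  | Some k => Some k
  | None => Fst n (fun k => (0 <? k) && (lo <=? rk n Y k) && (rk n Y k <? hi))
  end.
Proof.
  intros HD Hi Hj lo hi. unfold answer, S_set. rewrite filter_filter'.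
  change (head_opt (filter ?P (seq 1 n))) with (Fst n P).
  rewrite (Fst_ext n (fun k => in_region Y i j a k && (i <? k))
     (fun k => (i <? k) && (lo <=? rk n Y k) && (rk n Y k <? hi))).
  2:{ intros k Hk. rewrite (region_rk n Y i j a k) by auto. unfold lo, hi.
      destruct (i <? k); simpl; rewrite ?Bool.andb_true_r, ?Bool.andb_false_r; auto. }
  destruct (Fst n _); auto. apply Fst_ext. intros k Hk.
  rewrite (region_rk n Y i j a k) by auto. replace (0 <? k) with true by (symmetry; apply Nat.ltb_lt; lia).
  reflexivity.
Qed.

Lemma answer_left n Y i j a : distinct_on n Y -> 1 <= i <= n -> 1 <= j <= n ->
  let lo := fst (rng a n (rk n Y i) (rk n Y j)) in let hi := snd (rng a n (rk n Y i) (rk n Y j)) in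
  let r1 := fun k => rk n Y (n + 1 - k) in
  answer n Y i j a Left =
  match Fst n (fun k => (n + 1 - i <? k) && (lo <=? r1 k) && (r1 k <? hi)) with
  | Some k => Some (n + 1 - k)
  | None => option_map (fun k => n + 1 - k) (Fst n (fun k => (0 <? k) && (lo <=? r1 k) && (r1 k <? hi)))
  end.
Proof.
  intros HD Hi Hj lo hi r1. unfold answer, S_set. rewrite filter_filter', !last_filter.
  rewrite (Fst_ext n (fun k => in_region Y i j a (n + 1 - k) && (n + 1 - k <? i))
     (fun k => (n + 1 - i <? k) && (lo <=? r1 k) && (r1 k <? hi))).
  2:{ intros k Hk. rewrite (region_rk n Y i j a (n + 1 - k)) by (auto; lia). unfold lo, hi, r1.
      replace (n + 1 - k <? i) with (n + 1 - i <? k)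
        by (destruct (Nat.ltb_spec (n + 1 - k) i); destruct (Nat.ltb_spec (n + 1 - i) k); auto; lia).
      destruct (n + 1 - i <? k); simpl; rewrite ?Bool.andb_true_r, ?Bool.andb_false_r; auto. }
  destruct (Fst n _); auto. simpl. f_equal. apply Fst_ext. intros k Hk.
  rewrite (region_rk n Y i j a (n + 1 - k)) by (auto; lia).
  replace (0 <? k) with true by (symmetry; apply Nat.ltb_lt; lia). reflexivity.
Qed.

Definition Qtree n f L (i j : nat) (a : region) (dir : direction) : ptree :=
  Probe i (fun ri => Probe j (fun rj =>
    let lo := fst (rng a n ri rj) in let hi := snd (rng a n ri rj) in
    match dir with
    | Right => bind (alg n f L 0 L 0 lo hi i)
                 (fun r => match r with Some k => Leaf (Some k) | None => alg n f L 0 L 0 lo hi 0 end)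
    | Left => bind (alg n f L 1 L 0 lo hi (n + 1 - i))
                 (fun r => match r with
                           | Some k => Leaf (Some (n + 1 - k))
                           | None => bind (alg n f L 1 L 0 lo hi 0)
                                       (fun r' => Leaf (option_map (fun k => n + 1 - k) r'))
                           end)
    end)).

Lemma query_ok n f L Y i j a dir : 1 <= f -> n <= f ^ L -> distinct_on n Y ->
  1 <= i <= n -> 1 <= j <= n ->
  run (2 + 2 * cost L) (table n f L (rk n Y) (fun k => rk n Y (n + 1 - k))) (Qtree n f L i j a dir)
  = Some (answer n Y i j a dir).
Proof.
  intros Hf HN HD Hi Hj.
  set (r1 := fun k => rk n Y (n + 1 - k)).
  set (T := table n f L (rk n Y) r1).
  assert (HT0 : TabOK n f L (rk n Y) 0 T) by exact (table_ok n f L (rk n Y) r1 0 Hf ltac:(lia)).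
  assert (HT1 : TabOK n f L r1 1 T) by exact (table_ok n f L (rk n Y) r1 1 Hf ltac:(lia)).
  assert (Hb0 : forall k, 1 <= k <= n -> rk n Y k < n) by (intros; apply rk_bound; auto).
  assert (Hb1 : forall k, 1 <= k <= n -> r1 k < n) by (intros; unfold r1; apply rk_bound; lia).
  assert (Hi0 := rk_inj n Y HD).
  assert (Hi1 : InjOn n r1).
  { intros x y Hx Hy E. apply Hi0 in E; lia. }
  assert (Hlt : forall x, x <= n -> x < SIZE n f L) by (intros; unfold SIZE; lia).
  assert (En : forall x, x <= n -> nth x T 0 = rk n Y x).
  { intros x Hx. unfold T. rewrite nth_table by auto. unfold Ent.
    replace (x <? S n) with true by (symmetry; apply Nat.ltb_lt; lia). reflexivity. }
  unfold Qtree. replace (2 + 2 * cost L) with (S (S (cost L + (cost L + 0)))) by lia.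
  cbn [run]. rewrite !En by lia. cbv zeta.
  destruct dir.
  - rewrite answer_right by auto.
    eapply run_bind. { apply (root_query n f L (rk n Y) 0 T); auto; lia. }
    destruct (Fst n _); [simpl; destruct (cost L + 0); reflexivity|].
    rewrite Nat.add_0_r. apply (root_query n f L (rk n Y) 0 T); auto; lia.
  - rewrite answer_left by auto. fold r1.
    eapply run_bind. { apply (root_query n f L r1 1 T); auto; lia. }
    destruct (Fst n _); [simpl; destruct (cost L + 0); reflexivity|].
    eapply run_bind. { apply (root_query n f L r1 1 T); auto; lia. }
    reflexivity.
Qed.

Lemma table_bound n f L Y x : In x (table n f L (rk n Y) (fun k => rk n Y (n + 1 - k))) -> x < n + 1.
Proof. intros H. apply table_vals in H; [lia|]. intros; apply rk_le. Qed.


Local Open Scope R_scope.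

Lemma Rpow_ge1 (n : nat) (e : R) : (1 <= n)%nat -> 0 <= e -> 1 <= Rpower (INR n) e.
Proof.
  intros Hn He. rewrite <- (Rpower_O (INR n)) by (apply lt_0_INR; lia).
  apply Rle_Rpower; auto. apply (le_INR 1) in Hn. simpl in Hn. lra.
Qed.

Lemma exists_f (n L : nat) : (1 <= n)%nat -> (1 <= L)%nat ->
  exists f : nat, (1 <= f)%nat /\ (n <= f ^ L)%nat /\ INR f <= 2 * Rpower (INR n) (/ INR L).
Proof.
  intros Hn HL. set (x := Rpower (INR n) (/ INR L)).
  assert (HL' : 0 < INR L) by (apply lt_0_INR; lia).
  assert (Hx1 : 1 <= x) by (apply Rpow_ge1; auto; left; apply Rinv_0_lt_compat; auto).
  destruct (archimed x) as [Hu1 Hu2].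
  assert (Hz : (0 <= up x)%Z) by (apply Z.lt_le_incl, lt_0_IZR; lra).
  exists (Z.to_nat (up x)).
  assert (HF : INR (Z.to_nat (up x)) = IZR (up x)) by (rewrite INR_IZR_INZ, Znat.Z2Nat.id; auto).
  split; [|split].
  - destruct (Z.to_nat (up x)) eqn:E; [|lia]. simpl in HF. lra.
  - apply INR_le. rewrite pow_INR, HF.
    assert (Hxn : x ^ L = INR n).
    { unfold x. rewrite <- Rpower_pow by (apply exp_pos).
      rewrite Rpower_mult. rewrite Rinv_l by lra. apply Rpower_1. apply lt_0_INR; lia. }
    rewrite <- Hxn. apply pow_incr. lra.
  - rewrite HF. lra.
Qed.

Lemma exists_L (eps : R) : 0 < eps -> exists L : nat, (1 <= L)%nat /\ 2 / INR L <= eps.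
Proof.
  intros He. destruct (archimed_cor1 (eps / 2) ltac:(lra)) as [N [HN HN0]].
  exists N. split; [lia|]. unfold Rdiv. lra.
Qed.

Lemma size_bound (n f L : nat) (eps : R) : (1 <= n)%nat -> (1 <= L)%nat -> 2 / INR L <= eps -> 0 < eps ->
  (1 <= f)%nat -> INR f <= 2 * Rpower (INR n) (/ INR L) ->
  INR (SIZE n f L) <= (2 + 108 * INR (S L) * 2 ^ L) * Rpower (INR n) (1 + eps).
Proof.
  intros Hn HL HeL He Hf HF.
  set (x := Rpower (INR n) (/ INR L)) in *.
  assert (HL' : 0 < INR L) by (apply lt_0_INR; lia).
  assert (Hn' : 0 < INR n) by (apply lt_0_INR; lia).
  assert (Hn1 : 1 <= INR n) by (apply (le_INR 1) in Hn; simpl in Hn; lra).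
  assert (Hx1 : 1 <= x) by (apply Rpow_ge1; auto; left; apply Rinv_0_lt_compat; auto).
  assert (Hxn : x ^ L = INR n).
  { unfold x. rewrite <- Rpower_pow by (apply exp_pos).
    rewrite Rpower_mult. rewrite Rinv_l by lra. apply Rpower_1. auto. }
  set (P1 := Rpower (INR n) eps).
  assert (HP1 : 1 <= P1) by (apply Rpow_ge1; auto; lra).
  assert (Hx2 : x ^ 2 <= P1).
  { unfold x. rewrite <- Rpower_pow by (apply exp_pos). rewrite Rpower_mult.
    apply Rle_Rpower; auto. simpl. unfold Rdiv in HeL. lra. }
  assert (HPe : Rpower (INR n) (1 + eps) = INR n * P1) by (rewrite Rpower_plus, Rpower_1; auto).
  rewrite HPe.
  set (F := INR f) in *.
  assert (HF0 : 0 <= F) by (apply pos_INR).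
  assert (A1 : F ^ L <= 2 ^ L * INR n).
  { rewrite <- Hxn, <- Rpow_mult_distr. apply pow_incr. lra. }
  assert (A2 : (F + 1) * (F + 1) <= 9 * P1).
  { assert ((F + 1) * (F + 1) <= (3 * x) * (3 * x)) by (apply Rmult_le_compat; lra).
    simpl in Hx2. lra. }
  assert (A3 : F ^ L * ((F + 1) * (F + 1)) <= (2 ^ L * INR n) * (9 * P1)).
  { apply Rmult_le_compat; auto. apply pow_le; auto. nra. }
  assert (HS : INR (SIZE n f L) = INR n + 1 + 12 * (INR (S L) * (F ^ L * ((F + 1) * (F + 1))))).
  { unfold SIZE, Mw, Bx. rewrite plus_INR, !mult_INR, pow_INR, !plus_INR, !S_INR. fold F.
    replace (INR 2) with 2 by (simpl; lra). replace (INR 3) with 3 by (simpl; lra).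
    replace (INR 1) with 1 by (simpl; lra). simpl (INR 0). ring. }
  rewrite HS.
  assert (HSL : 0 <= INR (S L)) by apply pos_INR.
  assert (A4 : INR (S L) * (F ^ L * ((F + 1) * (F + 1))) <= INR (S L) * ((2 ^ L * INR n) * (9 * P1)))
    by (apply Rmult_le_compat_l; auto).
  assert (A5 : INR n <= INR n * P1) by nra.
  replace ((2 + 108 * INR (S L) * 2 ^ L) * (INR n * P1))
    with (2 * (INR n * P1) + 12 * (INR (S L) * ((2 ^ L * INR n) * (9 * P1)))) by ring.
  lra.
Qed.


Theorem mainTheorem8 :
  forall eps : R, 0 < eps ->
  exists (C : R) (K W : nat),
    forall n : nat, (1 <= n)%nat ->
    exists Q : nat -> nat -> region -> direction -> ptree,
      forall Y : nat -> R, distinct_on n Y ->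
      exists table : list nat,
        INR (length table) <= C * Rpower (INR n) (1 + eps) /\
        (forall x, In x table -> (x < (n + 1) ^ W)%nat) /\
        (forall (i j : nat) (a : region) (d : direction),
            (1 <= i <= n)%nat -> (1 <= j <= n)%nat ->
            run K table (Q i j a d) = Some (answer n Y i j a d)).
Proof.
  intros eps Heps.
  destruct (exists_L eps Heps) as [L [HL HeL]].
  exists (2 + 108 * INR (S L) * 2 ^ L), (2 + 2 * cost L)%nat, 1%nat.
  intros n Hn.
  destruct (exists_f n L Hn HL) as [f [Hf [HN HF]]].
  exists (Qtree n f L). intros Y HY.
  exists (table n f L (rk n Y) (fun k => rk n Y (n + 1 - k))).
  split; [rewrite table_len; apply size_bound; auto|split].
  - intros x Hx. rewrite Nat.pow_1_r. apply (table_bound n f L Y x Hx).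
  - intros i j a d Hi Hj. apply query_ok; auto.
Qed.
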